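(* Let $a_+>0$, $I_0>0$, let $t_0$ be an integer time, and let $N(t_0),N(t_0+1),N(t_0+2),\dots$ be nonnegative real numbers. Let $m$ be an integer with $0\le m<\lfloor a_+\rfloor+1$, and consider the linear system in the $m+1$ unknowns $x_0,\dots,x_m$ (where $x_a$ stands for $\mathcal{R}(t_0+m,a)$) consisting of the $m+1$ equations, for $k=0,1,\dots,m$, $$\sum_{j=0}^{k-1}N(t_0+k-j)\,x_{m-k+j}\;+\;I_0\,x_m\;+\;\sum_{d=1}^{m-k}N(t_0+m-d)\,x_d\;=\;N(t_0+m).$$ If $\prod_{j=1}^{m}N(t_0+j)\neq0$ (the empty product being $1$), then this linear system has a unique solution $(x_0,\dots,x_m)$.
   Context: This is the day-by-day (time step $1$) discretization of an infection-age-structured SIRS model started at time $t_0$ from a single cohort of $I_0$ infected individuals of infection age $0$; $N(t)$ is the number of newly infected individuals on day $t$, and $\mathcal{R}(t,a)=\tau(t)S(t)e^{-(\nu+D)a}\beta(a)$ is the reproductive power (rate at which an infectious individual at time $t$ and infection age $a$ produces secondary cases), with $\beta(a)=0$ for $a\ge a_+$. The $k$-th equation expresses $N(t_0+m)$ via the cohort structure present at time $t_0+k$, using that the cohort of infection age $j$ at time $t_0+k$ has size $e^{-(\nu+D)j}N(t_0+k-j)$ (and $I_0$ for the initial cohort). *)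

(* Defs.v *)
From HB Require Import structures.
From mathcomp Require Import all_boot all_order all_algebra.
From mathcomp Require Import all_classical all_reals.
Set Implicit Arguments. Unset Strict Implicit. Unset Printing Implicit Defensive.
Import Order.TTheory GRing.Theory Num.Theory.
Local Open Scope ring_scope.

Definition sirs_eq (R : realType) (N : int -> R) (t0 : int) (I0 : R)
    (m : nat) (x : 'cV[R]_m.+1) (k : nat) : Prop :=
  \sum_(0 <= j < k) N (t0 + k%:Z - j%:Z) * x (inord (m - k + j)) 0
  + I0 * x (inord m) 0
  + \sum_(1 <= d < (m - k).+1) N (t0 + m%:Z - d%:Z) * x (inord d) 0
  = N (t0 + m%:Z).

Definition sirs_system (R : realType) (N : int -> R) (t0 : int) (I0 : R)
    (m : nat) (x : 'cV[R]_m.+1) : Prop :=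
  forall k : nat, (k <= m)%N -> sirs_eq N t0 I0 x k.

(* Main.v *)
Require Import Defs.
From HB Require Import structures.
From mathcomp Require Import all_boot all_order all_algebra.
From mathcomp Require Import all_classical all_reals.
From mathcomp Require Import zify ring lra.
Import Order.TTheory GRing.Theory Num.Theory.
Set Implicit Arguments. Unset Strict Implicit.
Local Open Scope ring_scope.

Section S.
Variables (R : realType) (I0 : R) (t0 : int) (N : int -> R) (m : nat).

Definition cc (y : 'cV[R]_m.+1) (i : nat) := N (t0 + m%:Z - i%:Z) * y (inord i) 0.

Lemma eq_cc (y : 'cV[R]_m.+1) k : (k <= m)%N ->
  sirs_eq N t0 I0 y k <->
  \sum_(0 <= j < k) cc y (m - k + j) + I0 * y (inord m) 0
  + \sum_(1 <= d < (m - k).+1) cc y d = N (t0 + m%:Z).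
Proof.
move=> hk; rewrite /sirs_eq.
have -> : \sum_(0 <= j < k) N (t0 + k%:Z - j%:Z) * y (inord (m - k + j)) 0
   = \sum_(0 <= j < k) cc y (m - k + j).
  apply: eq_big_nat => j _; rewrite /cc; congr (N _ * _); lia.
by [].
Qed.

Lemma cc_rec (y : 'cV[R]_m.+1) k : (k < m)%N ->
  sirs_eq N t0 I0 y k -> sirs_eq N t0 I0 y k.+1 -> cc y (m - k.+1) = cc y (m - k).
Proof.
move=> hk /eq_cc E1 /eq_cc E2.
have {E1} := E1 (ltnW hk); have {E2} := E2 hk.
rewrite big_nat_recl // addn0.
have -> : ((m - k).+1 = (m - k.+1).+2)%N by lia.
rewrite (big_nat_recr (m - k.+1).+1) /=; last lia.
have -> : ((m - k.+1).+1 = (m - k))%N by lia.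
have -> : \sum_(0 <= i < k) cc y (m - k.+1 + i.+1) = \sum_(0 <= i < k) cc y (m - k + i).
  by apply: eq_big_nat => i _; congr (cc y _); lia.
move=> A B; lra.
Qed.

Lemma cc_const (y : 'cV[R]_m.+1) : sirs_system N t0 I0 y ->
  forall i, (i <= m)%N -> cc y i = cc y m.
Proof.
move=> hs i hi.
have -> : i = (m - (m - i))%N by lia.
have : (m - i <= m)%N by lia.
elim: (m - i)%N => [|k IH] hk; first by rewrite subn0.
rewrite (@cc_rec y k); first (rewrite IH //; lia).
- lia.
- apply: hs; lia.
- apply: hs; lia.
Qed.

End S.

Lemma sum_const_cc (R : realType) (t0 : int) (N : int -> R) (m : nat) (y : 'cV[R]_m.+1) (c : R) k :
  (k <= m)%N -> (forall i, (i <= m)%N -> cc t0 N y i = c) ->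
  \sum_(0 <= j < k) cc t0 N y (m - k + j) = c *+ k /\
  \sum_(1 <= d < (m - k).+1) cc t0 N y d = c *+ (m - k).
Proof.
move=> hk hc; split.
  rewrite (eq_big_nat _ _ (F2 := fun _ => c)) ?sumr_const_nat ?subn0 // => j /andP[_ hj].
  apply: hc; lia.
rewrite (eq_big_nat _ _ (F2 := fun _ => c)) ?sumr_const_nat ?subSS ?subn0 // => j /andP[h1 hj].
apply: hc; lia.
Qed.

Unset Implicit Arguments. Set Strict Implicit.
Theorem theorem5p2 (R : realType) (aplus I0 : R) (t0 : int) (N : int -> R)
    (m : nat) :
  0 < aplus -> 0 < I0 ->
  (forall k : nat, 0 <= N (t0 + k%:Z)) ->
  m%:Z < Num.floor aplus + 1 ->
  \prod_(1 <= j < m.+1) N (t0 + j%:Z) != 0 ->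
  exists x : 'cV[R]_m.+1,
    sirs_system N t0 I0 x /\ (forall y : 'cV[R]_m.+1, sirs_system N t0 I0 y -> y = x).
Proof.
move=> _ hI hN _ hP.
have N0 : 0 <= N t0 by have := hN 0%N; rewrite addr0.
have hD : 0 < m%:R * N t0 + I0.
  have : 0 <= m%:R * N t0 by apply: mulr_ge0.
  lra.
have nz : forall i, (i < m)%N -> N (t0 + m%:Z - i%:Z) != 0.
  move=> i hi; move: hP; rewrite prodf_seq_neq0 => /allP /(_ (m - i)%N).
  rewrite mem_index_iota => /(_ ltac:(lia)) /=.
  by have -> : t0 + m%:Z - i%:Z = t0 + (m - i)%N%:Z by lia.
set X := N (t0 + m%:Z) / (m%:R * N t0 + I0).
have ccm : forall y : 'cV[R]_m.+1, cc t0 N y m = N t0 * y (inord m) 0.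
  by move=> y; rewrite /cc addrK.
have sol : forall y : 'cV[R]_m.+1, sirs_system N t0 I0 y ->
   (forall i, (i <= m)%N -> cc t0 N y i = N t0 * y (inord m) 0) /\ y (inord m) 0 = X.
  move=> y hs.
  have hc : forall i, (i <= m)%N -> cc t0 N y i = N t0 * y (inord m) 0.
    by move=> i hi; rewrite (cc_const hs hi) ccm.
  split => //.
  have := hs 0%N (leq0n _); rewrite (eq_cc _ _ _ _ (leq0n _)).
  have [-> ->] := sum_const_cc (leq0n m) hc.
  rewrite subn0 mulr0n add0r /X => E.
  apply: (mulIf (lt0r_neq0 hD)).
  rewrite -mulrA mulVf ?lt0r_neq0 // mulr1 -E -mulr_natl; ring.
pose x : 'cV[R]_m.+1 := \col_(i < m.+1)
  (if (i == m :> nat) then X else N t0 * X / N (t0 + m%:Z - i%:Z)).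
have xm : x (inord m) 0 = X by rewrite /x mxE inordK // eqxx.
have ccx : forall i, (i <= m)%N -> cc t0 N x i = N t0 * X.
  move=> i hi; rewrite /cc /x mxE inordK //.
  case: eqP => [->|/eqP hne]; first by rewrite addrK mulrC.
  have hi' : (i < m)%N by rewrite ltn_neqAle hne.
  by rewrite mulrC divfK // nz.
exists x; split.
  move=> k hk; rewrite (eq_cc _ _ _ _ hk).
  have [-> ->] := sum_const_cc hk ccx.
  rewrite xm -addrA [I0 * X + _]addrC addrA -mulrnDr subnKC // /X -mulr_natl.
  field; exact: lt0r_neq0.
move=> y hs; have [hc ym] := sol y hs.
apply/matrixP => i j; rewrite (ord1 j) {j}.
rewrite /x mxE.
have -> : y i 0 = y (inord i) 0 by rewrite inord_val.
case: eqP => [hm|/eqP hne].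
  by rewrite -ym hm.
have hi' : (i < m)%N by have := ltn_ord i; move: hne; lia.
have := hc i (ltnW hi'); rewrite /cc ym => E.
apply: (mulfI (nz _ hi')); by rewrite E [RHS]mulrC divfK // nz.
Qed.
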